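(* Let $\mathcal{F}=\bigcap_{t=1}^k\mathcal{F}^t$ where for each $t\in[k]$, $\mathcal{F}^t\subseteq[0;B]^I$ is a downward-closed subset of $[0;B]^I$. Suppose each $\mathcal{F}^t$ has a monotone $\alpha_t$-CRS with regards to $q$. Then $\mathcal{F}$ has a monotone $\prod_{t=1}^k\alpha_t$-CRS with regards to $q$.
   Context: Let $I=\{1,\dots,n\}$ be a finite set of items and $[0;B]=\{0,1,\dots,B\}$, $[B]=\{1,\dots,B\}$. For $u,v\in[0;B]^I$, $u\le v$ means $u(i)\le v(i)$ for all $i\in I$. A subset $\mathcal{F}\subseteq[0;B]^I$ is downward-closed if $u\le v\in\mathcal{F}$ implies $u\in\mathcal{F}$. Let $q: I\times[0;B]\to[0,1]$ be a probability distribution (for each $i$, $q(i,\cdot)$ sums to 1), and let $v\in[0;B]^I$ be a random vector where, independently for each $i\in I$, $v(i)=j$ with probability $q(i,j)$. For $\alpha\in[0,1]$, an $\alpha$-contention resolution scheme ($\alpha$-CRS) for a downward-closed $\mathcal{F}$ with regards to $q$ is a (possibly randomized) mapping $\psi:[0;B]^I\to\mathcal{F}$ such that (i) for each $i\in I$, $\psi(v)(i)\in\{0,v(i)\}$, and (ii) for each $i\in I$ and $j\in[B]$, $\Pr[\psi(v)(i)=j\mid v(i)=j]\ge\alpha$, where the probability is over both the random choice of $v$ and the internal randomness of $\psi$. An $\alpha$-CRS $\psi$ is monotone if for all $u,v\in[0;B]^I$ with $u(i)=v(i)$ and $u\le v$, $\Pr[\psi(u)(i)=u(i)]\ge\Pr[\psi(v)(i)=v(i)]$,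 where the probability is only over the internal randomness of $\psi$. *)

(* Defs.v *)
From HB Require Import structures.
From mathcomp Require Import all_boot all_order all_algebra.
Set Implicit Arguments. Unset Strict Implicit. Unset Printing Implicit Defensive.
Import Order.TTheory GRing.Theory Num.Theory.
Local Open Scope ring_scope.

(* Items I = 'I_n, values [0;B] = 'I_B.+1; vectors in [0;B]^I. *)
Definition vec (n B : nat) := {ffun 'I_n -> 'I_B.+1}.

Definition leV n B (u v : vec n B) : bool := [forall i, (u i <= v i)%N].

Definition downward_closed n B (F : {set vec n B}) : Prop :=
  forall u v : vec n B, leV u v -> v \in F -> u \in F.

Section CRS.
Variables (R : realFieldType) (n B : nat).

Definition is_dist (q : 'I_n -> 'I_B.+1 -> R) : Prop :=
  (forall i j, 0 <= q i j) /\ (forall i, \sum_j q i j = 1).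

Definition probv (q : 'I_n -> 'I_B.+1 -> R) (v : vec n B) : R :=
  \prod_i q i (v i).

(* A randomized mapping psi is given by its output distribution psi v
   on [0;B]^I for each input v. *)
Definition scheme := vec n B -> {ffun vec n B -> R}.

Definition valid_scheme (F : {set vec n B}) (psi : scheme) : Prop :=
  forall v : vec n B,
    (forall w, 0 <= psi v w) /\ (\sum_w psi v w = 1) /\
    (forall w, psi v w != 0 ->
       w \in F /\ forall i, (w i = 0 :> nat)%N \/ w i = v i).

Definition joint_keep (q : 'I_n -> 'I_B.+1 -> R) (psi : scheme)
    (i : 'I_n) (j : 'I_B.+1) : R :=
  \sum_(v : vec n B) \sum_(w : vec n B)
     (if (v i == j) && (w i == j) then probv q v * psi v w else 0).

Definition prob_val (q : 'I_n -> 'I_B.+1 -> R) (i : 'I_n) (j : 'I_B.+1) : R :=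
  \sum_(v : vec n B | v i == j) probv q v.

(* alpha-CRS: conditional probability Pr[psi(v)(i)=j | v(i)=j] >= alpha,
   required whenever the conditioning event has positive probability. *)
Definition is_CRS (q : 'I_n -> 'I_B.+1 -> R) (F : {set vec n B})
    (alpha : R) (psi : scheme) : Prop :=
  0 <= alpha <= 1 /\ valid_scheme F psi /\
  forall (i : 'I_n) (j : 'I_B.+1), (0 < j)%N -> 0 < prob_val q i j ->
    alpha <= joint_keep q psi i j / prob_val q i j.

Definition keep_prob (psi : scheme) (v : vec n B) (i : 'I_n) : R :=
  \sum_(w : vec n B | w i == v i) psi v w.

Definition monotone_scheme (psi : scheme) : Prop :=
  forall (u v : vec n B) (i : 'I_n), u i = v i -> leV u v ->
    keep_prob psi v i <= keep_prob psi u i.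

Definition has_monotone_CRS (q : 'I_n -> 'I_B.+1 -> R) (F : {set vec n B})
    (alpha : R) : Prop :=
  exists psi : scheme, is_CRS q F alpha psi /\ monotone_scheme psi.

End CRS.

(* Main.v *)
Require Import Defs.
From HB Require Import structures.
From mathcomp Require Import all_boot all_order all_algebra.
From Stdlib Require Import IndefiniteDescription.
Import Order.TTheory GRing.Theory Num.Theory.
Local Open Scope ring_scope.
Set Implicit Arguments. Unset Strict Implicit.
From mathcomp Require Import ring.

Section H.
Variables (R : realFieldType) (n B : nat).
Implicit Types (q : 'I_n -> 'I_B.+1 -> R).

Definition upd (v : vec n B) (m : 'I_n) (a : 'I_B.+1) : vec n B :=
  [ffun i => if i == m then a else v i].

Definition Ex q (h : vec n B -> R) : R := \sum_v probv q v * h v.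

Definition decr (h : vec n B -> R) := forall u v : vec n B, leV u v -> h v <= h u.

Lemma probv_ge0 q : is_dist q -> forall v, 0 <= probv q v.
Proof. move=> [hq _] v; apply: prodr_ge0 => i _; exact: hq. Qed.

Lemma sum_probv q : is_dist q -> \sum_v probv q v = 1.
Proof.
move=> [_ hq]; rewrite /probv -bigA_distr_bigA /=.
by apply: big1 => i _; exact: hq.
Qed.

Lemma Ex_const q c : is_dist q -> Ex q (fun _ => c) = c.
Proof. by move=> hq; rewrite /Ex -mulr_suml sum_probv // mul1r. Qed.

Lemma updK v m a : upd (upd v m a) m (v m) = v.
Proof. by apply/ffunP => i; rewrite !ffunE; case: eqP => // ->. Qed.

Lemma upd_at v m a : upd v m a m = a.
Proof. by rewrite ffunE eqxx. Qed.

Lemma resample q (hq : is_dist q) (m : 'I_n) h :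
  Ex q h = \sum_a q m a * Ex q (fun v => h (upd v m a)).
Proof.
pose r (v : vec n B) := \prod_(i | i != m) q i (v i).
have pE v : probv q v = q m (v m) * r v by rewrite /probv (bigD1 m).
have rE v a : r (upd v m a) = r v.
  by apply: eq_bigr => i /negbTE im; rewrite ffunE im.
pose G (p : vec n B * 'I_B.+1) := q m p.2 * (q m (p.1 m) * r p.1 * h p.1).
pose s (p : vec n B * 'I_B.+1) := (upd p.1 m p.2, p.1 m).
have sK : cancel s s by case=> v a; rewrite /s /= updK upd_at.
have -> : Ex q h = \sum_p G p.
  rewrite -(pair_bigA _ (fun v b => G (v, b))) /G /Ex /=.
  by apply: eq_bigr => v _; rewrite -mulr_suml (proj2 hq) mul1r pE.
rewrite (reindex_inj (can_inj sK)) /=.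
rewrite -(pair_bigA _ (fun v b => G (s (v, b)))) /= exchange_big /=.
apply: eq_bigr => a _; rewrite /Ex mulr_sumr; apply: eq_bigr => v _.
rewrite /G /s /= upd_at rE pE; ring.
Qed.

Lemma cheb (p F G : 'I_B.+1 -> R) :
  (forall a, 0 <= p a) -> \sum_a p a = 1 ->
  (forall a b : 'I_B.+1, (a <= b)%N -> F b <= F a) ->
  (forall a b : 'I_B.+1, (a <= b)%N -> G b <= G a) ->
  (\sum_a p a * F a) * (\sum_a p a * G a) <= \sum_a p a * (F a * G a).
Proof.
move=> p0 p1 hF hG.
set X := \sum_a p a * (F a * G a).
set Y := (\sum_a p a * F a) * (\sum_a p a * G a).
have D0 : 0 <= \sum_a \sum_b p a * p b * ((F a - F b) * (G a - G b)).
  apply: sumr_ge0 => a _; apply: sumr_ge0 => b _.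
  apply: mulr_ge0; first by apply: mulr_ge0.
  case: (leqP a b) => ab.
    by apply: mulr_ge0; rewrite subr_ge0; [apply: hF|apply: hG].
  by apply: mulr_le0; rewrite subr_le0; [apply: hF|apply: hG]; apply: ltnW.
have hX : \sum_a \sum_b p a * (F a * G a) * p b = X.
  by apply: eq_bigr => a _; rewrite -mulr_sumr p1 mulr1.
have hX' : \sum_a \sum_b p b * (F b * G b) * p a = X.
  by rewrite exchange_big; apply: eq_bigr => a _; rewrite -mulr_sumr p1 mulr1.
have hY : \sum_a \sum_b p a * F a * (p b * G b) = Y.
  by rewrite /Y mulr_suml; apply: eq_bigr => a _; rewrite mulr_sumr.
have hY' : \sum_a \sum_b p b * F b * (p a * G a) = Y.
  by rewrite exchange_big /Y mulr_suml; apply: eq_bigr => a _; rewrite mulr_sumr.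
have E : \sum_a \sum_b p a * p b * ((F a - F b) * (G a - G b)) =
  \sum_a \sum_b ((p a * (F a * G a) * p b + p b * (F b * G b) * p a) -
                 (p a * F a * (p b * G b) + p b * F b * (p a * G a))).
  by apply: eq_bigr => a _; apply: eq_bigr => b _; ring.
move: D0; rewrite E.
under eq_bigr do rewrite sumrB !big_split /=.
rewrite sumrB !big_split /= hX hX' hY hY'.
rewrite subr_ge0 -!mulr2n lerMn2r /=.
by [].
Qed.

Definition dep (m : nat) (f : vec n B -> R) :=
  forall v v' : vec n B, (forall i : 'I_n, (i < m)%N -> v i = v' i) -> f v = f v'.

Lemma leV_upd u v m (a b : 'I_B.+1) : leV u v -> (a <= b)%N -> leV (upd u m a) (upd v m b).
Proof.
move=> /forallP uv ab; apply/forallP => i; rewrite !ffunE.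
by case: (i == m) => //; apply: uv.
Qed.

Lemma harris q (hq : is_dist q) f g : decr f -> decr g ->
  Ex q f * Ex q g <= Ex q (fun v => f v * g v).
Proof.
suff H : forall m f g, decr f -> decr g -> dep m f -> dep m g ->
  Ex q f * Ex q g <= Ex q (fun v => f v * g v).
  move=> df dg; apply: (H n) => // v v' e;
    by have -> : v = v' by apply/ffunP => i; apply: e.
elim=> [|m IH] {}f {}g df dg hf hg.
  pose v0 : vec n B := [ffun => ord0].
  have cf v : f v = f v0 by apply: hf.
  have cg v : g v = g v0 by apply: hg.
  rewrite /Ex; under eq_bigr do rewrite cf.
  under [X in _ * X]eq_bigr do rewrite cg.
  under [X in _ <= X]eq_bigr do rewrite cf cg.
  by rewrite -!mulr_suml sum_probv // !mul1r.
case: (ltnP m n) => mn; last first.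
  apply: IH => // v v' e; [apply: hf|apply: hg] => i _; apply: e;
    exact: leq_trans (ltn_ord i) mn.
pose mm := Ordinal mn.
have dU (h : vec n B -> R) a : decr h -> decr (fun v => h (upd v mm a)).
  by move=> dh u v uv; apply: dh; apply: leV_upd.
have hU (h : vec n B -> R) a : dep m.+1 h -> dep m (fun v => h (upd v mm a)).
  move=> dh v v' e; apply: dh => i im; rewrite !ffunE.
  case: eqP => // /eqP ne; apply: e.
  have ne' : (val i != m) by apply: contra ne => /eqP e'; apply/eqP/val_inj.
  by rewrite ltn_neqAle ne' -ltnS.
have mon (h : vec n B -> R) : decr h -> forall a b : 'I_B.+1, (a <= b)%N ->
    Ex q (fun v => h (upd v mm b)) <= Ex q (fun v => h (upd v mm a)).
  move=> dh a b ab; apply: ler_sum => v _; apply: ler_wpM2l; first exact: (probv_ge0 hq).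
  apply: (dh (upd v mm a) (upd v mm b)); apply: leV_upd => //.
  by apply/forallP => i.
rewrite (resample hq mm f) (resample hq mm g) (resample hq mm).
apply: le_trans; first apply: (cheb (proj1 hq mm) (proj2 hq mm) (mon _ df) (mon _ dg)).
apply: ler_sum => a _; apply: ler_wpM2l; first exact: (proj1 hq).
by apply: IH; [apply: dU|apply: dU|apply: hU|apply: hU].
Qed.

Lemma harris_prod q (hq : is_dist q) k (F : 'I_k -> vec n B -> R) :
  (forall t, decr (F t)) -> (forall t v, 0 <= F t v) ->
  \prod_(t < k) Ex q (F t) <= Ex q (fun v => \prod_(t < k) F t v).
Proof.
elim: k F => [|k IH] F dF nF.
  rewrite big_ord0 /Ex; under eq_bigr do rewrite big_ord0 mulr1.
  by rewrite sum_probv.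
rewrite big_ord_recr /=.
apply: le_trans.
  apply: ler_wpM2r; last first.
  - apply: (IH (fun t => F (widen_ord (leqnSn k) t))) => // t; exact: dF.
  - by apply: sumr_ge0 => v _; apply: mulr_ge0; [exact: (probv_ge0 hq)|exact: nF].
apply: le_trans; first apply: (harris hq).
- by move=> u v uv; apply: ler_prod => t _; rewrite nF dF.
- exact: dF.
rewrite le_eqVlt; apply/orP; left; apply/eqP.
by apply: eq_bigr => v _; rewrite big_ord_recr.
Qed.

Definition qc q (i : 'I_n) (j : 'I_B.+1) : 'I_n -> 'I_B.+1 -> R :=
  fun i' a => if i' == i then (a == j)%:R else q i' a.

Lemma qc_dist q i j : is_dist q -> is_dist (qc q i j).
Proof.
move=> [h0 h1]; split=> [i' a|i']; rewrite /qc; case: eqP => _ //.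
rewrite (bigD1 j) //= eqxx big1 ?addr0 // => a /negbTE -> //.
Qed.

Lemma probv_qc q (i : 'I_n) (j : 'I_B.+1) (v : vec n B) :
  (v i == j)%:R * probv q v = q i j * probv (qc q i j) v.
Proof.
rewrite /probv (bigD1 i) //= [in RHS](bigD1 i) //=.
have -> : \prod_(i' | i' != i) qc q i j i' (v i') = \prod_(i' | i' != i) q i' (v i').
  by apply: eq_bigr => i' /negbTE ne; rewrite /qc ne.
rewrite /qc eqxx; case: eqP => [->|_]; rewrite ?mul1r ?mulr1 ?mul0r ?mulr0 //.
Qed.

Lemma prob_valE q (i : 'I_n) (j : 'I_B.+1) : is_dist q -> prob_val q i j = q i j.
Proof.
move=> hq; rewrite /prob_val big_mkcond /=.
transitivity (\sum_v q i j * probv (qc q i j) v).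
  by apply: eq_bigr => v _; rewrite -probv_qc; case: (v i == j); rewrite ?mul1r ?mul0r.
by rewrite -mulr_sumr sum_probv ?mulr1 //; apply: qc_dist.
Qed.

Lemma joint_keepE q (i : 'I_n) (j : 'I_B.+1) (psi : scheme R n B) :
  joint_keep q psi i j = q i j * Ex (qc q i j) (fun v => keep_prob psi (upd v i j) i).
Proof.
rewrite /joint_keep /Ex mulr_sumr; apply: eq_bigr => v _.
have -> : \sum_(w : vec n B) (if (v i == j) && (w i == j) then probv q v * psi v w else 0)
    = (v i == j)%:R * probv q v * keep_prob psi v i.
  rewrite /keep_prob mulr_sumr [in RHS]big_mkcond /=.
  apply: eq_bigr => w _.
  by case: eqP => [->|_] /=; rewrite ?mul1r ?mul0r //; case: ifP => //; rewrite mulr0.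
rewrite probv_qc -mulrA; case: (v i =P j) => [e|ne].
  have -> : upd v i j = v.
    by apply/ffunP => x; rewrite ffunE; case: eqP => // ->; rewrite e.
  by [].
have -> : probv (qc q i j) v = 0.
  by rewrite /probv (bigD1 i) //= /qc eqxx; move/eqP/negbTE: ne => ->; rewrite !mul0r.
by rewrite !mul0r mulr0.
Qed.

Definition comb k (v : vec n B) (W : {ffun 'I_k -> vec n B}) : vec n B :=
  [ffun i => if [forall t, W t i == v i] then v i else ord0].

Definition cpsi k (psis : 'I_k -> scheme R n B) : scheme R n B :=
  fun v => [ffun w => \sum_(W : {ffun 'I_k -> vec n B})
                        (\prod_t psis t v (W t)) * (w == comb v W)%:R].

Lemma keepE (psi : scheme R n B) v i :
  keep_prob psi v i = \sum_w psi v w * (w i == v i)%:R.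
Proof.
rewrite /keep_prob big_mkcond /=; apply: eq_bigr => w _.
by case: ifP; rewrite ?mulr1 ?mulr0.
Qed.

Section Comb.
Variables (k : nat) (F : 'I_k -> {set vec n B}) (psis : 'I_k -> scheme R n B).
Hypothesis hv : forall t, valid_scheme (F t) (psis t).

Lemma cpsi_ge0 v w : 0 <= cpsi psis v w.
Proof.
rewrite ffunE; apply: sumr_ge0 => W _; apply: mulr_ge0 => //.
by apply: prodr_ge0 => t _; case: (hv t v) => h _; apply: h.
Qed.

Lemma sum_delta (P : pred (vec n B)) (c : vec n B) :
  \sum_(w | P w) (w == c)%:R = (P c)%:R :> R.
Proof.
rewrite big_mkcond /= (bigD1 c) //= eqxx big1 ?addr0.
  by case: (P c).
by move=> w /negbTE ->; case: (P w).
Qed.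

Lemma cpsi_sum v : \sum_w cpsi psis v w = 1.
Proof.
under eq_bigr do rewrite ffunE.
rewrite exchange_big /=.
under eq_bigr do rewrite -mulr_sumr (sum_delta xpredT) mulr1.
rewrite -(bigA_distr_bigA (fun t x => psis t v x)) /=.
by apply: big1 => t _; case: (hv t v) => _ [].
Qed.

Lemma keep_cpsi v i : keep_prob (cpsi psis) v i = \prod_t keep_prob (psis t) v i.
Proof.
transitivity (\sum_(w : vec n B | w i == v i) \sum_(W : {ffun 'I_k -> vec n B})
     (\prod_t psis t v (W t)) * (w == comb v W)%:R).
  by apply: eq_bigr => w _; rewrite /cpsi ffunE.
rewrite exchange_big /=.
under eq_bigr do rewrite -mulr_sumr (sum_delta (fun w : vec n B => w i == v i)).
under [RHS]eq_bigr do rewrite keepE.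
rewrite bigA_distr_bigA /=.
apply: eq_bigr => W _.
rewrite big_split /=.
have [P0|Pn0] := eqVneq (\prod_t psis t v (W t)) 0; first by rewrite P0 !mul0r.
congr (_ * _).
have hW t : (W t i = 0 :> nat)%N \/ W t i = v i.
  case: (hv t v) => _ [_ h]; apply: (proj2 (h (W t) _)).
  apply/negP => /eqP z; move: Pn0; rewrite (bigD1 t) //= z mul0r eqxx //.
rewrite /comb ffunE.
case: (boolP [forall t, W t i == v i]) => [/forallP al|/forallPn [t nt]].
  by rewrite eqxx big1 // => t _; rewrite al.
rewrite (bigD1 t) //= (negbTE nt) mul0r.
case: eqP => // e; exfalso; apply: (negP nt); apply/eqP.
case: (hW t) => // h; apply/val_inj => /=; by rewrite h -e.
Qed.

Lemma cpsi_supp (hdc : forall t, downward_closed (F t)) v w :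
  cpsi psis v w != 0 ->
  w \in \bigcap_(t < k) F t /\ forall i, (w i = 0 :> nat)%N \/ w i = v i.
Proof.
rewrite /cpsi ffunE => nz.
have [W nzW] : exists W : {ffun 'I_k -> vec n B},
    (\prod_t psis t v (W t)) * (w == comb v W)%:R != 0.
  case: (pickP (fun W : {ffun 'I_k -> vec n B} =>
     (\prod_t psis t v (W t)) * (w == comb v W)%:R != 0)) => [W h|h].
    by exists W.
  move: nz; rewrite big1 ?eqxx // => W _; exact/eqP/negbFE/h.
have ew : w = comb v W by move: nzW; case: (w =P comb v W) => // _; rewrite mulr0 eqxx.
have PnZ : \prod_t psis t v (W t) != 0.
  by move: nzW; apply: contra => /eqP ->; rewrite mul0r.
have hWt t : W t \in F t /\ forall i, (W t i = 0 :> nat)%N \/ W t i = v i.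
  case: (hv t v) => _ [_ h]; apply: h; apply/negP => /eqP z.
  by move: PnZ; rewrite (bigD1 t) //= z mul0r eqxx.
split.
  apply/bigcapP => t _; apply: (hdc t w (W t)) (proj1 (hWt t)).
  rewrite ew; apply/forallP => i; rewrite /comb ffunE.
  by case: ifP => [/forallP al|_] //; rewrite (eqP (al t)).
by move=> i; rewrite ew /comb ffunE; case: ifP => _; [right|left].
Qed.

Lemma keep_ge0 (G : {set vec n B}) (psi : scheme R n B) :
  valid_scheme G psi -> forall v i, 0 <= keep_prob psi v i.
Proof. by move=> hG v i; apply: sumr_ge0 => w _; case: (hG v) => h _; apply: h. Qed.
End Comb.
End H.

Unset Implicit Arguments.
Set Strict Implicit.
Theorem lemma2 (R : realFieldType) (n B k : nat)
    (q : 'I_n -> 'I_B.+1 -> R) (F : 'I_k -> {set vec n B}) (alpha : 'I_k -> R) :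
  is_dist q ->
  (forall t, downward_closed (F t)) ->
  (forall t, has_monotone_CRS q (F t) (alpha t)) ->
  has_monotone_CRS q (\bigcap_(t < k) F t) (\prod_(t < k) alpha t).
Proof.
move=> hq hdc hC.
have hC' : forall t, exists psi : scheme R n B,
    is_CRS q (F t) (alpha t) psi /\ monotone_scheme psi := hC.
have [psis hps] := functional_choice _ hC'.
have hv t : valid_scheme (F t) (psis t) := proj1 (proj2 (proj1 (hps t))).
exists (cpsi psis); split; last first.
  move=> u v i e uv; rewrite !(keep_cpsi hv); apply: ler_prod => t _.
  by rewrite (keep_ge0 (hv t)) /=; apply: (proj2 (hps t)).
split.
  apply/andP; split; first by apply: prodr_ge0 => t _; case/andP: (proj1 (proj1 (hps t))).
  by apply: prodr_ile1 => t _; exact: (proj1 (proj1 (hps t))).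
split.
  move=> v; split; first by move=> w; exact: cpsi_ge0.
  split; first exact: cpsi_sum.
  by move=> w; apply: cpsi_supp.
move=> i j j0 pv; rewrite prob_valE // in pv *.
rewrite joint_keepE mulrC mulKf ?gt_eqF // /Ex.
under [X in _ <= X]eq_bigr do rewrite (keep_cpsi hv).
pose f t (v : vec n B) := keep_prob (psis t) (upd v i j) i.
apply: le_trans (harris_prod (qc_dist i j hq) (F := f) _ _); last first.
- by move=> t v; apply: (keep_ge0 (hv t)).
- move=> t u v uv; apply: (proj2 (hps t)); first by rewrite !upd_at.
  by apply: leV_upd.
apply: ler_prod => t _; apply/andP; split; first by case/andP: (proj1 (proj1 (hps t))).
have := proj2 (proj2 (proj1 (hps t))) i j j0.
by rewrite prob_valE // joint_keepE mulrC mulKf ?gt_eqF //; apply.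
Qed.
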